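(* Define $\tau:\mathbb N\to\mathbb N$ by $$\tau(n)=\begin{cases}\lfloor\varphi n+1\rfloor, & n\in R_{2,0},\\ \lfloor\varphi n-1\rfloor, & n\in R_{1,0},\\ \lfloor(\varphi-1) n+1\rfloor, & n\in R_{1,1}.\end{cases}$$ Then $\tau$ is an $R_{i,j}$-permutation of $\mathbb N$ (first values $1,2,5,3,7,4,10,13,6,15,\dots$), and its inverse is the $R_{i,j}$-permutation $$\tau^{-1}(n)=\begin{cases}\lfloor\varphi n\rfloor, & n\in R_{2,0}\cup R_{1,1},\\ \lfloor(\varphi-1) n+1\rfloor, & n\in R_{2,1},\\ \lfloor(\varphi-1) n\rfloor, & n\in R_{3,0}.\end{cases}$$
   Context: $\mathbb N=\{1,2,\dots\}$, $\varphi=\frac{1+\sqrt5}{2}$, $F$ the Fibonacci numbers ($F(0)=0,F(1)=F(2)=1$). For $i\in\mathbb Z^{\ge0},j\in\mathbb Z$, $R_{i,j}$ is the range of $n\mapsto F(i+1)\lfloor n\varphi\rfloor+F(i)n-j$, $n\in\mathbb N$. An $R_{i,j}$-permutation is a permutation $\pi$ of $\mathbb N$ defined piecewise on a finite partition of $\mathbb N$ into sets $R_{i,j}$, with $\pi(n)=\lfloor(a\varphi+b)n+c\rfloor$ on each piece for integers $a,b,c$ depending on the piece. *)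

(* Defs.v *)
From Stdlib Require Import Reals ZArith List ClassicalEpsilon.
Open Scope R_scope.

Fixpoint fib (n : nat) : Z :=
  match n with
  | O => 0%Z
  | S O => 1%Z
  | S ((S m) as p) => (fib p + fib m)%Z
  end.

Definition phi : R := (1 + sqrt 5) / 2.

Definition flr (x : R) : Z := Int_part x.

(* N = {1,2,...} is represented by the integers n with 1 <= n. *)
Definition Rset (i : nat) (j : Z) (m : Z) : Prop :=
  exists n : Z, (1 <= n)%Z /\
    m = (fib (S i) * flr (IZR n * phi) + fib i * n - j)%Z.

Definition RpartN (l : list (nat * Z)) : Prop :=
  (forall p, In p l -> forall m, Rset (fst p) (snd p) m -> (1 <= m)%Z) /\
  (forall m, (1 <= m)%Z -> exists p, In p l /\ Rset (fst p) (snd p) m) /\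
  (forall k1 k2 m, (k1 < length l)%nat -> (k2 < length l)%nat -> k1 <> k2 ->
     Rset (fst (nth k1 l (O, 0%Z))) (snd (nth k1 l (O, 0%Z))) m ->
     Rset (fst (nth k2 l (O, 0%Z))) (snd (nth k2 l (O, 0%Z))) m -> False).

(* a piece: ((i, j), (a, b, c)) meaning pi(n) = floor((a phi + b) n + c) on R_{i,j} *)
Definition piece := ((nat * Z) * (Z * Z * Z))%type.

Definition piece_fun (abc : Z * Z * Z) (n : Z) : Z :=
  let '(a, b, c) := abc in
  flr ((IZR a * phi + IZR b) * IZR n + IZR c).

Definition perm_of_N (pi : Z -> Z) : Prop :=
  (forall n, (1 <= n)%Z -> (1 <= pi n)%Z) /\
  (forall n1 n2, (1 <= n1)%Z -> (1 <= n2)%Z -> pi n1 = pi n2 -> n1 = n2) /\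
  (forall m, (1 <= m)%Z -> exists n, (1 <= n)%Z /\ pi n = m).

Definition is_Rperm (pi : Z -> Z) : Prop :=
  perm_of_N pi /\
  exists ps : list piece,
    RpartN (map fst ps) /\
    (forall p, In p ps -> forall n, Rset (fst (fst p)) (snd (fst p)) n ->
        pi n = piece_fun (snd p) n).

Definition pif {A : Type} (P : Prop) (x y : A) : A :=
  if excluded_middle_informative P then x else y.

(* tau as defined piecewise in the paper (value 0 outside the three sets,
   irrelevant since they partition N) *)
Definition tau (n : Z) : Z :=
  pif (Rset 2 0 n) (flr (phi * IZR n + 1))
  (pif (Rset 1 0 n) (flr (phi * IZR n - 1))
  (pif (Rset 1 1 n) (flr ((phi - 1) * IZR n + 1)) 0%Z)).

Definition tau_inv (n : Z) : Z :=
  pif (Rset 2 0 n \/ Rset 1 1 n) (flr (phi * IZR n))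
  (pif (Rset 2 1 n) (flr ((phi - 1) * IZR n + 1))
  (pif (Rset 3 0 n) (flr ((phi - 1) * IZR n)) 0%Z)).

(* Main.v *)
Require Import Defs.
From Stdlib Require Import Reals ZArith List.
From Stdlib Require Import Lia Lra Psatz ClassicalEpsilon.
Import Defs.
Open Scope R_scope.


Lemma flr_spec x : IZR (flr x) <= x /\ x < IZR (flr x) + 1.
Proof. unfold flr; destruct (base_Int_part x); lra. Qed.

Lemma flr_unique x a : IZR a <= x -> x < IZR a + 1 -> flr x = a.
Proof.
  intros H1 H2. destruct (flr_spec x) as [H3 H4].
  assert (a < flr x + 1)%Z by (apply lt_IZR; rewrite plus_IZR; lra).
  assert (flr x < a + 1)%Z by (apply lt_IZR; rewrite plus_IZR; lra).
  lia.
Qed.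

Lemma flr_addZ x c : flr (x + IZR c) = (flr x + c)%Z.
Proof.
  destruct (flr_spec x). apply flr_unique; rewrite plus_IZR; lra.
Qed.

Lemma sqrt5_b : 2.236 < sqrt 5 < 2.237.
Proof.
  assert (H := sqrt_sqrt 5 ltac:(lra)). assert (H0 := sqrt_pos 5).
  split; nra.
Qed.

Lemma phi_sq : phi * phi = phi + 1.
Proof.
  unfold phi. assert (H := sqrt_sqrt 5 ltac:(lra)). nra.
Qed.

Lemma phi_b : 1.618 < phi < 1.6185.
Proof. unfold phi; destruct sqrt5_b; lra. Qed.

Lemma no_sq5_aux N : forall q p, (0 < q)%Z -> (q <= Z.of_nat N)%Z -> (p*p <> 5*q*q)%Z.
Proof.
  induction N as [|N IH]; intros q p Hq HN E; [lia|].
  pose proof (Z.div_mod p 5 ltac:(lia)) as Hd.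
  pose proof (Z.mod_pos_bound p 5 ltac:(lia)) as Hb.
  set (k := (p / 5)%Z) in *. set (r := (p mod 5)%Z) in *.
  assert (Hr : (r*r = 5*(q*q - 5*k*k - 2*k*r))%Z) by (rewrite Hd in E; nia).
  assert (r = 0 \/ r = 1 \/ r = 2 \/ r = 3 \/ r = 4)%Z as Hc by lia.
  remember (q*q - 5*k*k - 2*k*r)%Z as t.
  destruct Hc as [H0|[H0|[H0|[H0|H0]]]]; rewrite H0 in Hr; try lia.
  rewrite H0 in Hd. assert (E2 : (q*q = 5*k*k)%Z) by nia.
  assert (Hk : (0 < Z.abs k < q)%Z) by nia.
  apply (IH (Z.abs k) q); [lia|lia|].
  rewrite E2. destruct (Z.abs_spec k) as [[_ ->]|[_ ->]]; ring.
Qed.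

Lemma no_sq5 q p : (q <> 0)%Z -> (p*p <> 5*q*q)%Z.
Proof.
  intros Hq E. apply (no_sq5_aux (Z.to_nat (Z.abs q)) (Z.abs q) p); [lia|lia|].
  rewrite E. destruct (Z.abs_spec q) as [[_ ->]|[_ ->]]; ring.
Qed.

Lemma irr n a : (n <> 0)%Z -> IZR n * phi <> IZR a.
Proof.
  intros Hn E. unfold phi in E.
  assert (H := sqrt_sqrt 5 ltac:(lra)).
  assert (E2 : IZR n * sqrt 5 = IZR (2*a - n)) by (rewrite minus_IZR, mult_IZR; lra).
  apply (no_sq5 n (2*a-n)%Z Hn). apply eq_IZR.
  rewrite !mult_IZR, <- E2. replace (IZR n * sqrt 5 * (IZR n * sqrt 5)) with (IZR n * IZR n * (sqrt 5 * sqrt 5)) by ring. rewrite H; ring.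
Qed.

Definition A (n : Z) : Z := flr (IZR n * phi).
Definition Bf (n : Z) : Z := (A n + n)%Z.

Lemma A_spec n : (1 <= n)%Z -> IZR (A n) < IZR n * phi < IZR (A n) + 1.
Proof.
  intros Hn. unfold A. destruct (flr_spec (IZR n * phi)) as [H1 H2].
  split; [|lra]. destruct H1 as [H1|H1]; [exact H1|].
  exfalso. apply (irr n (flr (IZR n * phi))); [lia|]. auto.
Qed.

Lemma A_ge n : (1 <= n)%Z -> (n <= A n)%Z.
Proof.
  intros Hn. destruct (A_spec n Hn). destruct phi_b.
  assert (1 <= IZR n) by (apply IZR_le; lia).
  assert (IZR n < IZR (A n) + 1) by nra.
  assert (n < A n + 1)%Z by (apply lt_IZR; rewrite plus_IZR; lra). lia.
Qed.

Lemma A_AA m : (1 <= m)%Z -> A (A m) = (A m + m - 1)%Z.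
Proof.
  intros Hm. pose proof (A_ge m Hm). destruct (A_spec m Hm) as [H1 H2].
  destruct phi_b. pose proof phi_sq.
  unfold A at 1. apply flr_unique; rewrite !minus_IZR, !plus_IZR.
  - assert (0 < (IZR (A m) + 1 - IZR m * phi) * (phi - 1)) by (apply Rmult_lt_0_compat; lra).
    assert (IZR m * (phi*phi) = IZR m * (phi+1)) by (rewrite phi_sq; auto).
    nra.
  - assert (0 < (IZR m * phi - IZR (A m)) * (phi - 1)) by (apply Rmult_lt_0_compat; lra).
    assert (IZR m * (phi*phi) = IZR m * (phi+1)) by (rewrite phi_sq; auto).
    assert (IZR (A m) * (phi*phi) = IZR (A m) * (phi+1)) by (rewrite phi_sq; auto).
    nra.
Qed.

Lemma A_AB m : (1 <= m)%Z -> A (Bf m) = (2 * A m + m)%Z.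
Proof.
  intros Hm. destruct (A_spec m Hm) as [H1 H2].
  destruct phi_b. pose proof phi_sq.
  unfold Bf, A at 1. apply flr_unique; rewrite ?plus_IZR, ?mult_IZR.
  - assert (0 < (IZR m * phi - IZR (A m)) * (2 - phi)) by (apply Rmult_lt_0_compat; lra).
    assert (IZR m * (phi*phi) = IZR m * (phi+1)) by (rewrite phi_sq; auto).
    assert (IZR (A m) * (phi*phi) = IZR (A m) * (phi+1)) by (rewrite phi_sq; auto).
    nra.
  - assert (0 < (IZR (A m) + 1 - IZR m * phi) * (2 - phi)) by (apply Rmult_lt_0_compat; lra).
    assert (IZR m * (phi*phi) = IZR m * (phi+1)) by (rewrite phi_sq; auto).
    assert (IZR (A m) * (phi*phi) = IZR (A m) * (phi+1)) by (rewrite phi_sq; auto).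
    nra.
Qed.

Lemma part m : (1 <= m)%Z -> (exists k, (1 <= k)%Z /\ m = A k) \/ (exists k, (1 <= k)%Z /\ m = Bf k).
Proof.
  intros Hm. destruct phi_b. pose proof phi_sq.
  assert (HM : 1 <= IZR m) by (apply IZR_le; lia).
  set (k := flr (IZR (m+1) * (phi - 1))).
  destruct (flr_spec (IZR (m+1) * (phi - 1))) as [K1 K2]. fold k in K1, K2.
  rewrite plus_IZR in K1, K2.
  destruct (Rlt_or_le (IZR m) (IZR k * phi)) as [C|C].
  - left. exists k.
    assert (Hk : (1 <= k)%Z).
    { assert (0 < IZR k) by nra. assert (0 < k)%Z by (apply lt_IZR; auto). lia. }
    split; [exact Hk|]. symmetry. unfold A. apply flr_unique; [lra|].
    assert (HL : IZR k * phi <= IZR m + 1).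
    { assert (IZR k * phi <= (IZR m + 1) * (phi - 1) * phi) by nra. nra. }
    destruct HL as [HL|HL]; [exact HL|].
    exfalso. apply (irr k (m+1)); [lia|]. rewrite plus_IZR; exact HL.
  - right. exists (m - k)%Z.
    assert (k < m)%Z.
    { apply lt_IZR. destruct (Z_le_gt_dec k 0) as [Hk0|Hk0].
      - assert (IZR k <= 0) by (apply IZR_le; lia). lra.
      - assert (1 <= IZR k) by (apply IZR_le; lia). nra. }
    split; [lia|]. unfold Bf.
    assert (A (m - k) = k) as ->; [|ring].
    unfold A. apply flr_unique; rewrite minus_IZR.
    + assert (IZR k * (phi*phi) <= IZR m * phi) by (rewrite <- Rmult_assoc; apply Rmult_le_compat_r; lra).
      nra.
    + assert (0 < (IZR k + 1 - (IZR m + 1) * (phi - 1)) * phi) by (apply Rmult_lt_0_compat; lra).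
      assert (IZR m * (phi*phi) = IZR m * (phi+1)) by (rewrite phi_sq; auto).
      nra.
Qed.

Lemma disj k j : (1 <= k)%Z -> (1 <= j)%Z -> A k <> Bf j.
Proof.
  intros Hk Hj E. unfold Bf in E.
  destruct (A_spec k Hk) as [K1 K2]. destruct (A_spec j Hj) as [J1 J2].
  set (m := A k) in *. assert (A j = m - j)%Z as Ej by lia. rewrite Ej, minus_IZR in J1, J2.
  destruct phi_b. pose proof phi_sq.
  assert (0 < (IZR k * phi - IZR m) * (phi - 1)) by (apply Rmult_lt_0_compat; lra).
  assert (0 < (IZR m + 1 - IZR k * phi) * (phi - 1)) by (apply Rmult_lt_0_compat; lra).
  assert (0 < (IZR j * phi - (IZR m - IZR j)) * (2 - phi)) by (apply Rmult_lt_0_compat; lra).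
  assert (0 < (IZR m - IZR j + 1 - IZR j * phi) * (2 - phi)) by (apply Rmult_lt_0_compat; lra).
  assert (IZR k * (phi*phi) = IZR k * (phi+1)) by (rewrite phi_sq; auto).
  assert (IZR j * (phi*phi) = IZR j * (phi+1)) by (rewrite phi_sq; auto).
  assert (IZR m < IZR (k + j)) by (rewrite plus_IZR; nra).
  assert (IZR (k + j) < IZR (m + 1)) by (rewrite !plus_IZR; nra).
  apply lt_IZR in H8. apply lt_IZR in H9. lia.
Qed.

Lemma A_mono k1 k2 : (k1 < k2)%Z -> (A k1 < A k2)%Z.
Proof.
  intros H. unfold A. destruct (flr_spec (IZR k1 * phi)). destruct (flr_spec (IZR k2 * phi)).
  destruct phi_b. assert (IZR k1 + 1 <= IZR k2) by (rewrite <- plus_IZR; apply IZR_le; lia).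
  apply lt_IZR. nra.
Qed.

Lemma A_inj k1 k2 : A k1 = A k2 -> k1 = k2.
Proof.
  intros E. destruct (Z.lt_trichotomy k1 k2) as [H|[H|H]]; auto;
  apply A_mono in H; lia.
Qed.

Lemma B_inj k1 k2 : Bf k1 = Bf k2 -> k1 = k2.
Proof.
  unfold Bf. intros E. destruct (Z.lt_trichotomy k1 k2) as [H|[H|H]]; auto;
  pose proof (A_mono _ _ H); lia.
Qed.

Lemma R20 m : Rset 2 0 m <-> exists k, (1 <= k)%Z /\ m = A (Bf k).
Proof.
  unfold Rset; simpl fib. change (fun n => flr (IZR n * phi)) with A.
  split; intros [k [Hk E]]; exists k; split; auto; rewrite A_AB in * by auto;
  change (flr (IZR k * phi)) with (A k) in *; lia.
Qed.
Lemma R10 m : Rset 1 0 m <-> exists k, (1 <= k)%Z /\ m = Bf k.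
Proof.
  unfold Rset, Bf; simpl fib.
  split; intros [k [Hk E]]; exists k; split; auto;
  change (flr (IZR k * phi)) with (A k) in *; lia.
Qed.
Lemma R11 m : Rset 1 1 m <-> exists k, (1 <= k)%Z /\ m = A (A k).
Proof.
  unfold Rset; simpl fib.
  split; intros [k [Hk E]]; exists k; split; auto; rewrite A_AA in * by auto;
  change (flr (IZR k * phi)) with (A k) in *; lia.
Qed.
Lemma R21 m : Rset 2 1 m <-> exists k, (1 <= k)%Z /\ m = Bf (A k).
Proof.
  unfold Rset; simpl fib.
  split; intros [k [Hk E]]; exists k; split; auto; unfold Bf in *; rewrite A_AA in * by auto;
  change (flr (IZR k * phi)) with (A k) in *; lia.
Qed.
Lemma R30 m : Rset 3 0 m <-> exists k, (1 <= k)%Z /\ m = Bf (Bf k).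
Proof.
  unfold Rset; simpl fib.
  split; intros [k [Hk E]]; exists k; split; auto;
  [ unfold Bf at 1 | unfold Bf at 1 in E]; rewrite A_AB in * by auto;
  unfold Bf in *;
  change (flr (IZR k * phi)) with (A k) in *; lia.
Qed.

Lemma Bge k : (1 <= k)%Z -> (1 <= Bf k)%Z.
Proof. intros; unfold Bf; pose proof (A_ge k H); lia. Qed.
Lemma Age k : (1 <= k)%Z -> (1 <= A k)%Z.
Proof. intros; pose proof (A_ge k H); lia. Qed.
Local Hint Resolve Bge Age : core.

Lemma dAB m : (exists k, (1 <= k)%Z /\ m = A k) -> (exists k, (1 <= k)%Z /\ m = Bf k) -> False.
Proof. intros [k [Hk ->]] [j [Hj E]]. exact (disj k j Hk Hj E). Qed.

Lemma d_20_10 m : Rset 2 0 m -> Rset 1 0 m -> False.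
Proof. rewrite R20, R10. intros [k [Hk ->]] H. apply (dAB (A (Bf k))); eauto. Qed.
Lemma d_11_10 m : Rset 1 1 m -> Rset 1 0 m -> False.
Proof. rewrite R11, R10. intros [k [Hk ->]] H. apply (dAB (A (A k))); eauto. Qed.
Lemma d_20_21 m : Rset 2 0 m -> Rset 2 1 m -> False.
Proof. rewrite R20, R21. intros [k [Hk ->]] [j [Hj E]]. apply (dAB (A (Bf k))); eauto. Qed.
Lemma d_20_30 m : Rset 2 0 m -> Rset 3 0 m -> False.
Proof. rewrite R20, R30. intros [k [Hk ->]] [j [Hj E]]. apply (dAB (A (Bf k))); eauto. Qed.
Lemma d_11_21 m : Rset 1 1 m -> Rset 2 1 m -> False.
Proof. rewrite R11, R21. intros [k [Hk ->]] [j [Hj E]]. apply (dAB (A (A k))); eauto. Qed.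
Lemma d_11_30 m : Rset 1 1 m -> Rset 3 0 m -> False.
Proof. rewrite R11, R30. intros [k [Hk ->]] [j [Hj E]]. apply (dAB (A (A k))); eauto. Qed.
Lemma d_20_11 m : Rset 2 0 m -> Rset 1 1 m -> False.
Proof. rewrite R20, R11. intros [k [Hk ->]] [j [Hj E]]. apply A_inj in E.
  apply (dAB (A j)); eauto. Qed.
Lemma d_21_30 m : Rset 2 1 m -> Rset 3 0 m -> False.
Proof. rewrite R21, R30. intros [k [Hk ->]] [j [Hj E]]. apply B_inj in E.
  apply (dAB (A k)); eauto. Qed.

Lemma clsA j : (1 <= j)%Z -> Rset 2 0 (A j) \/ Rset 1 1 (A j).
Proof.
  intros Hj. rewrite R20, R11. destruct (part j Hj) as [[k [Hk ->]]|[k [Hk ->]]]; eauto.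
Qed.

Lemma cls1 n : (1 <= n)%Z -> Rset 2 0 n \/ Rset 1 0 n \/ Rset 1 1 n.
Proof.
  intros Hn. destruct (part n Hn) as [[k [Hk ->]]|[k [Hk ->]]].
  - destruct (clsA k Hk); auto.
  - right; left. apply R10; eauto.
Qed.

Lemma cls2 n : (1 <= n)%Z -> Rset 2 0 n \/ Rset 1 1 n \/ Rset 2 1 n \/ Rset 3 0 n.
Proof.
  intros Hn. destruct (part n Hn) as [[k [Hk ->]]|[k [Hk ->]]].
  - destruct (clsA k Hk); auto.
  - rewrite R21, R30. destruct (part k Hk) as [[j [Hj ->]]|[j [Hj ->]]]; eauto 10.
Qed.

Lemma Rpos i j m : Rset i j m -> (forall a n, (1 <= n)%Z -> (n <= a)%Z -> (1 <= fib (S i) * a + fib i * n - j)%Z) -> (1 <= m)%Z.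
Proof.
  intros [n [Hn E]] H. pose proof (A_ge n Hn). change (flr (IZR n * phi)) with (A n) in E.
  subst m. apply H; auto.
Qed.

Lemma pif_t {X} (P : Prop) (x y : X) : P -> pif P x y = x.
Proof. unfold pif; destruct (excluded_middle_informative P); tauto. Qed.
Lemma pif_f {X} (P : Prop) (x y : X) : ~ P -> pif P x y = y.
Proof. unfold pif; destruct (excluded_middle_informative P); tauto. Qed.

Lemma tau_20 n : Rset 2 0 n -> tau n = flr (phi * IZR n + 1).
Proof. intros; unfold tau; rewrite pif_t; auto. Qed.
Lemma tau_10 n : Rset 1 0 n -> tau n = flr (phi * IZR n - 1).
Proof. intros; unfold tau; rewrite pif_f, pif_t; auto. intro; eapply d_20_10; eauto. Qed.
Lemma tau_11 n : Rset 1 1 n -> tau n = flr ((phi - 1) * IZR n + 1).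
Proof. intros; unfold tau; rewrite pif_f, pif_f, pif_t; auto.
  intro; eapply d_11_10; eauto. intro; eapply d_20_11; eauto. Qed.

Lemma ti_20 n : Rset 2 0 n \/ Rset 1 1 n -> tau_inv n = flr (phi * IZR n).
Proof. intros; unfold tau_inv; rewrite pif_t; auto. Qed.
Lemma ti_21 n : Rset 2 1 n -> tau_inv n = flr ((phi - 1) * IZR n + 1).
Proof. intros; unfold tau_inv; rewrite pif_f, pif_t; auto.
  intros [?|?]; [eapply d_20_21|eapply d_11_21]; eauto. Qed.
Lemma ti_30 n : Rset 3 0 n -> tau_inv n = flr ((phi - 1) * IZR n).
Proof. intros; unfold tau_inv; rewrite pif_f, pif_f, pif_t; auto.
  intro; eapply d_21_30; eauto.
  intros [?|?]; [eapply d_20_30|eapply d_11_30]; eauto. Qed.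

Lemma e1 n c : flr (phi * IZR n + IZR c) = (A n + c)%Z.
Proof. unfold A; rewrite <- flr_addZ, Rmult_comm; auto. Qed.
Lemma e2 n c : flr ((phi - 1) * IZR n + IZR c) = (A n - n + c)%Z.
Proof. replace (A n - n + c)%Z with (A n + (c - n))%Z by ring. unfold A.
  rewrite <- flr_addZ, minus_IZR. f_equal; ring. Qed.

Lemma tau_AB k : (1 <= k)%Z -> tau (A (Bf k)) = Bf (Bf k).
Proof. intros Hk. rewrite tau_20 by (apply R20; eauto). rewrite e1, A_AA by auto.
  change (Bf (Bf k)) with (A (Bf k) + Bf k)%Z; lia. Qed.
Lemma tau_B k : (1 <= k)%Z -> tau (Bf k) = Bf (A k).
Proof. intros Hk. rewrite tau_10 by (apply R10; eauto).
  replace (phi * IZR (Bf k) - 1) with (phi * IZR (Bf k) + IZR (-1)) by (simpl; ring).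
  rewrite e1, A_AB by auto. unfold Bf; rewrite A_AA by auto; lia. Qed.
Lemma tau_AA k : (1 <= k)%Z -> tau (A (A k)) = A k.
Proof. intros Hk. rewrite tau_11 by (apply R11; eauto). rewrite e2, !A_AA by auto. lia. Qed.

Lemma ti_A k : (1 <= k)%Z -> tau_inv (A k) = A (A k).
Proof. intros Hk. rewrite ti_20 by (apply clsA; auto).
  replace (phi * IZR (A k)) with (phi * IZR (A k) + IZR 0) by (simpl; ring).
  rewrite e1; lia. Qed.
Lemma ti_BA k : (1 <= k)%Z -> tau_inv (Bf (A k)) = Bf k.
Proof. intros Hk. rewrite ti_21 by (apply R21; eauto). rewrite e2, A_AB by auto.
  unfold Bf; rewrite A_AA by auto; lia. Qed.
Lemma ti_BB k : (1 <= k)%Z -> tau_inv (Bf (Bf k)) = A (Bf k).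
Proof. intros Hk. rewrite ti_30 by (apply R30; eauto).
  replace ((phi - 1) * IZR (Bf (Bf k))) with ((phi - 1) * IZR (Bf (Bf k)) + IZR 0) by (simpl; ring).
  rewrite e2. rewrite (A_AB (Bf k)) by auto. change (Bf (Bf k)) with (A (Bf k) + Bf k)%Z. lia. Qed.

Local Hint Resolve Bge Age : core.

Lemma inv1 n : (1 <= n)%Z -> tau_inv (tau n) = n.
Proof.
  intros Hn. destruct (cls1 n Hn) as [H|[H|H]].
  - apply R20 in H as [k [Hk ->]]. rewrite tau_AB, ti_BB; auto.
  - apply R10 in H as [k [Hk ->]]. rewrite tau_B, ti_BA; auto.
  - apply R11 in H as [k [Hk ->]]. rewrite tau_AA by lia; rewrite ti_A; auto.
Qed.

Lemma inv2 n : (1 <= n)%Z -> tau (tau_inv n) = n /\ (1 <= tau_inv n)%Z.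
Proof.
  intros Hn. destruct (part n Hn) as [[j [Hj ->]]|[k [Hk ->]]].
  - rewrite ti_A, tau_AA; auto.
  - destruct (part k Hk) as [[j [Hj ->]]|[j [Hj ->]]].
    + rewrite ti_BA, tau_B; auto.
    + rewrite ti_BB, tau_AB; auto.
Qed.

Lemma tau_pos n : (1 <= n)%Z -> (1 <= tau n)%Z.
Proof.
  intros Hn. destruct (cls1 n Hn) as [H|[H|H]].
  - apply R20 in H as [k [Hk ->]]. rewrite tau_AB; auto.
  - apply R10 in H as [k [Hk ->]]. rewrite tau_B; auto.
  - apply R11 in H as [k [Hk ->]]. rewrite tau_AA; auto.
Qed.

Lemma part1 : RpartN ((2%nat, 0%Z) :: (1%nat, 0%Z) :: (1%nat, 1%Z) :: nil).
Proof.
  split; [|split].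
  - simpl. intros p Hp; destruct Hp as [<-|[<-|[<-|[]]]]; simpl; intros m Hm;
    apply (Rpos _ _ _ Hm); cbn [fib fst snd]; intros; lia.
  - intros m Hm. destruct (cls1 m Hm) as [H|[H|H]];
    [exists (2%nat,0%Z)|exists (1%nat,0%Z)|exists (1%nat,1%Z)]; simpl; tauto.
  - intros k1 k2 m H1 H2 H3.
    destruct k1 as [|[|[|k1]]]; destruct k2 as [|[|[|k2]]]; simpl in *; try lia; intros X Y;
    first [ exact (d_20_10 _ X Y) | exact (d_20_10 _ Y X)
          | exact (d_11_10 _ X Y) | exact (d_11_10 _ Y X)
          | exact (d_20_11 _ X Y) | exact (d_20_11 _ Y X) ].
Qed.

Lemma part2 : RpartN ((2%nat, 0%Z) :: (1%nat, 1%Z) :: (2%nat, 1%Z) :: (3%nat, 0%Z) :: nil).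
Proof.
  split; [|split].
  - simpl. intros p Hp; destruct Hp as [<-|[<-|[<-|[<-|[]]]]]; simpl; intros m Hm;
    apply (Rpos _ _ _ Hm); cbn [fib fst snd]; intros; lia.
  - intros m Hm. destruct (cls2 m Hm) as [H|[H|[H|H]]];
    [exists (2%nat,0%Z)|exists (1%nat,1%Z)|exists (2%nat,1%Z)|exists (3%nat,0%Z)]; simpl; tauto.
  - intros k1 k2 m H1 H2 H3.
    destruct k1 as [|[|[|[|k1]]]]; destruct k2 as [|[|[|[|k2]]]]; simpl in *; try lia; intros X Y;
    first [ exact (d_20_11 _ X Y) | exact (d_20_11 _ Y X)
          | exact (d_20_21 _ X Y) | exact (d_20_21 _ Y X)
          | exact (d_20_30 _ X Y) | exact (d_20_30 _ Y X)
          | exact (d_11_21 _ X Y) | exact (d_11_21 _ Y X)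
          | exact (d_11_30 _ X Y) | exact (d_11_30 _ Y X)
          | exact (d_21_30 _ X Y) | exact (d_21_30 _ Y X) ].
Qed.

Lemma Aval n a : (IZR a <= IZR n * phi < IZR a + 1) -> A n = a.
Proof. intros [? ?]; unfold A; apply flr_unique; auto. Qed.

Lemma A1 : A 1 = 1%Z. Proof. apply Aval; unfold phi; destruct sqrt5_b; lra. Qed.
Lemma A2 : A 2 = 3%Z. Proof. apply Aval; unfold phi; destruct sqrt5_b; lra. Qed.
Lemma A3 : A 3 = 4%Z. Proof. apply Aval; unfold phi; destruct sqrt5_b; lra. Qed.
Lemma A4 : A 4 = 6%Z. Proof. apply Aval; unfold phi; destruct sqrt5_b; lra. Qed.
Lemma A5 : A 5 = 8%Z. Proof. apply Aval; unfold phi; destruct sqrt5_b; lra. Qed.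
Lemma A6 : A 6 = 9%Z. Proof. apply Aval; unfold phi; destruct sqrt5_b; lra. Qed.

Lemma B1 : Bf 1 = 2%Z. Proof. unfold Bf; rewrite A1; auto. Qed.
Lemma B2 : Bf 2 = 5%Z. Proof. unfold Bf; rewrite A2; auto. Qed.
Lemma B3 : Bf 3 = 7%Z. Proof. unfold Bf; rewrite A3; auto. Qed.
Lemma B4 : Bf 4 = 10%Z. Proof. unfold Bf; rewrite A4; auto. Qed.
Lemma B5 : Bf 5 = 13%Z. Proof. unfold Bf; rewrite A5; auto. Qed.
Lemma B6 : Bf 6 = 15%Z. Proof. unfold Bf; rewrite A6; auto. Qed.

Ltac sv T := do 3 rewrite ?A1, ?A2, ?A3, ?A4, ?A5, ?A6, ?B1, ?B2, ?B3, ?B4, ?B5, ?B6 in T.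

Lemma vals : map tau (1 :: 2 :: 3 :: 4 :: 5 :: 6 :: 7 :: 8 :: 9 :: 10 :: nil)%Z
    = (1 :: 2 :: 5 :: 3 :: 7 :: 4 :: 10 :: 13 :: 6 :: 15 :: nil)%Z.
Proof.
  pose proof (tau_AA 1 ltac:(lia)) as T1. sv T1.
  pose proof (tau_B 1 ltac:(lia)) as T2. sv T2.
  pose proof (tau_AB 1 ltac:(lia)) as T3. sv T3.
  pose proof (tau_AA 2 ltac:(lia)) as T4. sv T4.
  pose proof (tau_B 2 ltac:(lia)) as T5. sv T5.
  pose proof (tau_AA 3 ltac:(lia)) as T6. sv T6.
  pose proof (tau_B 3 ltac:(lia)) as T7. sv T7.
  pose proof (tau_AB 2 ltac:(lia)) as T8. sv T8.
  pose proof (tau_AA 4 ltac:(lia)) as T9. sv T9.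
  pose proof (tau_B 4 ltac:(lia)) as T10. sv T10.
  cbn [map]. rewrite T1, T2, T3, T4, T5, T6, T7, T8, T9, T10. reflexivity.
Qed.

Lemma perm_tau : is_Rperm tau.
Proof.
  split.
  - split; [|split].
    + exact tau_pos.
    + intros n1 n2 H1 H2 E. rewrite <- (inv1 n1 H1), <- (inv1 n2 H2), E. reflexivity.
    + intros m Hm. destruct (inv2 m Hm). exists (tau_inv m); auto.
  - exists (((2%nat, 0%Z), (1%Z, 0%Z, 1%Z)) :: ((1%nat, 0%Z), (1%Z, 0%Z, (-1)%Z))
             :: ((1%nat, 1%Z), (1%Z, (-1)%Z, 1%Z)) :: nil).
    split; [exact part1|].
    intros p Hp; destruct Hp as [<-|[<-|[<-|[]]]]; cbn [fst snd]; intros n Hn; unfold piece_fun.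
    + rewrite tau_20 by auto. f_equal. ring.
    + rewrite tau_10 by auto. f_equal. ring.
    + rewrite tau_11 by auto. f_equal. ring.
Qed.

Lemma perm_ti : is_Rperm tau_inv.
Proof.
  split.
  - split; [|split].
    + intros n Hn; apply (inv2 n Hn).
    + intros n1 n2 H1 H2 E. rewrite <- (proj1 (inv2 n1 H1)), <- (proj1 (inv2 n2 H2)), E. reflexivity.
    + intros m Hm. exists (tau m); split; [apply tau_pos; auto| apply inv1; auto].
  - exists (((2%nat, 0%Z), (1%Z, 0%Z, 0%Z)) :: ((1%nat, 1%Z), (1%Z, 0%Z, 0%Z))
             :: ((2%nat, 1%Z), (1%Z, (-1)%Z, 1%Z)) :: ((3%nat, 0%Z), (1%Z, (-1)%Z, 0%Z)) :: nil).
    split; [exact part2|].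
    intros p Hp; destruct Hp as [<-|[<-|[<-|[<-|[]]]]]; cbn [fst snd]; intros n Hn; unfold piece_fun.
    + rewrite ti_20 by auto. f_equal. ring.
    + rewrite ti_20 by auto. f_equal. ring.
    + rewrite ti_21 by auto. f_equal. ring.
    + rewrite ti_30 by auto. f_equal. ring.
Qed.

Theorem theorem4p5 :
  RpartN ((2%nat, 0%Z) :: (1%nat, 0%Z) :: (1%nat, 1%Z) :: nil) /\
  is_Rperm tau /\
  map tau (1 :: 2 :: 3 :: 4 :: 5 :: 6 :: 7 :: 8 :: 9 :: 10 :: nil)%Z
    = (1 :: 2 :: 5 :: 3 :: 7 :: 4 :: 10 :: 13 :: 6 :: 15 :: nil)%Z /\
  RpartN ((2%nat, 0%Z) :: (1%nat, 1%Z) :: (2%nat, 1%Z) :: (3%nat, 0%Z) :: nil) /\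
  is_Rperm tau_inv /\
  (forall n : Z, (1 <= n)%Z -> tau_inv (tau n) = n /\ tau (tau_inv n) = n).
Proof.
  split; [exact part1|]. split; [exact perm_tau|]. split; [exact vals|].
  split; [exact part2|]. split; [exact perm_ti|].
  intros n Hn; split; [apply inv1; auto | apply inv2; auto].
Qed.
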